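(* Let $((\Omega,\mathcal{A}),(\Omega,\mathcal{M}),t)$ be a single player type space and let $P \in \mathrm{pba}(\Omega,\mathcal{A})$ be arbitrary. Then exactly one of the following holds: (1) $P$ is $(\mathcal{M},t)$-disintegrable, i.e. $P(E\cap F)=\int_F t(\cdot,E)\,dP$ for every $E\in\mathcal{A}$ and $F\in\mathcal{M}$; (2) $P$ is a money pump, i.e. there exists $f\in B(\Omega,\mathcal{A})$ with $\int f\,dt(\omega,\cdot)\ge 0$ for all $\omega\in\Omega$ and $\int f\,dP<0$.
   Context: A field on a set $X$ is a collection of subsets of $X$ containing $X$ and closed under complements and finite intersections. For a field $\mathcal{A}$ on $\Omega$, $\mathrm{pba}(\Omega,\mathcal{A})$ denotes the set of finitely additive, nonnegative $P:\mathcal{A}\to\mathbb{R}$ with $P(\Omega)=1$ (probability charges), and $B(\Omega,\mathcal{A})$ denotes the closure in the supremum norm of the linear span of indicator functions of sets in $\mathcal{A}$; such functions have a well-defined integral against every probability charge. A single player type space $((\Omega,\mathcal{A}),(\Omega,\mathcal{M}),t)$ consists of a set $\Omega$, fields $\mathcal{M}\subseteq\mathcal{A}$ on $\Omega$, and a function $t:\Omega\times\mathcal{A}\to[0,1]$ such that (1) $t(\omega,\cdot)\in\mathrm{pba}(\Omega,\mathcal{A})$ for every $\omega$; (2) $t(\cdot,E)\in B(\Omega,\mathcal{M})$ for every $E\in\mathcal{A}$; (3) $t(\omega,E)=1$ whenever $E\in\mathcal{M}$ and $\omega\in E$. *)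

(* Defs.v *)
From Stdlib Require Import Reals Lra List ClassicalEpsilon.
Open Scope R_scope.

Section Defs.
Variable Omega : Type.

Definition setOm := Omega -> Prop.
Definition fullset : setOm := fun _ => True.
Definition compl (E : setOm) : setOm := fun w => ~ E w.
Definition inter (E F : setOm) : setOm := fun w => E w /\ F w.
Definition union (E F : setOm) : setOm := fun w => E w \/ F w.

Definition is_field (A : setOm -> Prop) : Prop :=
  A fullset /\
  (forall E, A E -> A (compl E)) /\
  (forall E F, A E -> A F -> A (inter E F)).

(* pba(Omega, A): finitely additive probability charges on A
   (values outside A are irrelevant). *)
Definition pba (A : setOm -> Prop) (P : setOm -> R) : Prop :=
  (forall E, A E -> 0 <= P E) /\
  P fullset = 1 /\
  (forall E F, A E -> A F -> (forall w, ~ (E w /\ F w)) ->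
     P (union E F) = P E + P F).

Definition indic (E : setOm) (w : Omega) : R :=
  if excluded_middle_informative (E w) then 1 else 0.

Definition simple_in (A : setOm -> Prop) (s : list (R * setOm)) : Prop :=
  forall p, In p s -> A (snd p).

Definition simple_eval (s : list (R * setOm)) (w : Omega) : R :=
  fold_right (fun p acc => fst p * indic (snd p) w + acc) 0 s.

Definition simple_int (P : setOm -> R) (s : list (R * setOm)) : R :=
  fold_right (fun p acc => fst p * P (snd p) + acc) 0 s.

Definition in_B (A : setOm -> Prop) (f : Omega -> R) : Prop :=
  forall eps, 0 < eps -> exists s, simple_in A s /\
    forall w, Rabs (f w - simple_eval s w) <= eps.

Definition is_integral (A : setOm -> Prop) (P : setOm -> R)
    (f : Omega -> R) (I : R) : Prop :=
  forall eps, 0 < eps -> exists s, simple_in A s /\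
    (forall w, Rabs (f w - simple_eval s w) <= eps) /\
    Rabs (I - simple_int P s) <= eps.

Definition type_space (A M : setOm -> Prop) (t : Omega -> setOm -> R) : Prop :=
  is_field A /\ is_field M /\ (forall E, M E -> A E) /\
  (forall w, pba A (t w)) /\
  (forall E, A E -> in_B M (fun w => t w E)) /\
  (forall E w, M E -> E w -> t w E = 1).

Definition disintegrable (A M : setOm -> Prop) (t : Omega -> setOm -> R)
    (P : setOm -> R) : Prop :=
  forall E F, A E -> M F ->
    is_integral A P (fun w => t w E * indic F w) (P (inter E F)).

Definition money_pump (A : setOm -> Prop) (t : Omega -> setOm -> R)
    (P : setOm -> R) : Prop :=
  exists f, in_B A f /\
    (forall w, exists I, is_integral A (t w) f I /\ 0 <= I) /\
    (exists I, is_integral A P f I /\ I < 0).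

End Defs.
Arguments fullset {Omega}.
Arguments compl {Omega}.
Arguments inter {Omega}.
Arguments union {Omega}.
Arguments is_field {Omega}.
Arguments pba {Omega}.
Arguments indic {Omega}.
Arguments simple_in {Omega}.
Arguments simple_eval {Omega}.
Arguments simple_int {Omega}.
Arguments in_B {Omega}.
Arguments is_integral {Omega}.
Arguments type_space {Omega}.
Arguments disintegrable {Omega}.
Arguments money_pump {Omega}.

(* Main.v *)
Require Import Defs.
From Stdlib Require Import Reals.
From Stdlib Require Import Lra List Classical FunctionalExtensionality PropExtensionality ClassicalEpsilon.
Open Scope R_scope.

Section S.
Context {Omega : Type}.
Implicit Types (E F G X Y : setOm Omega) (s : list (R * setOm Omega)).

Lemma set_ext E F : (forall w, E w <-> F w) -> E = F.
Proof. intros H; apply functional_extensionality; intro w; apply propositional_extensionality; auto. Qed.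

Lemma abs_le x d : Rabs x <= d <-> -d <= x <= d.
Proof. unfold Rabs; destruct Rcase_abs; split; intros; lra. Qed.

Lemma le_eps x e : (forall eta, 0 < eta -> x <= e + eta) -> x <= e.
Proof.
  intros H. destruct (Rle_or_lt x e) as [h|h]; auto.
  specialize (H ((x - e)/2)). lra.
Qed.

Lemma indic_full w : indic (@fullset Omega) w = 1.
Proof. unfold indic; destruct excluded_middle_informative as [_|n]; auto.
  exfalso; apply n; unfold fullset; exact I. Qed.

Lemma indic_in E w : E w -> indic E w = 1.
Proof. unfold indic; destruct excluded_middle_informative; tauto. Qed.
Lemma indic_out E w : ~ E w -> indic E w = 0.
Proof. unfold indic; destruct excluded_middle_informative; tauto. Qed.

Lemma eval_nil w : simple_eval (@nil (R * setOm Omega)) w = 0. Proof. reflexivity. Qed.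
Lemma eval_cons p s w : simple_eval (p :: s) w = fst p * indic (snd p) w + simple_eval s w.
Proof. reflexivity. Qed.
Lemma int_nil Q : simple_int Q (@nil (R * setOm Omega)) = 0. Proof. reflexivity. Qed.
Lemma int_cons Q p s : simple_int Q (p :: s) = fst p * Q (snd p) + simple_int Q s.
Proof. reflexivity. Qed.

Lemma eval_app s1 s2 w : simple_eval (s1 ++ s2) w = simple_eval s1 w + simple_eval s2 w.
Proof. induction s1 as [|p s1 IH]; simpl app; [rewrite eval_nil; ring|].
  rewrite !eval_cons, IH; ring. Qed.
Lemma int_app Q s1 s2 : simple_int Q (s1 ++ s2) = simple_int Q s1 + simple_int Q s2.
Proof. induction s1 as [|p s1 IH]; simpl app; [rewrite int_nil; ring|].
  rewrite !int_cons, IH; ring. Qed.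

Definition scale (a : R) s := map (fun p => (a * fst p, snd p)) s.
Lemma eval_scale a s w : simple_eval (scale a s) w = a * simple_eval s w.
Proof. induction s as [|p s IH]; [unfold scale; simpl map; rewrite eval_nil; ring|].
  unfold scale; simpl map; rewrite !eval_cons; fold (scale a s); rewrite IH; simpl; ring. Qed.
Lemma int_scale Q a s : simple_int Q (scale a s) = a * simple_int Q s.
Proof. induction s as [|p s IH]; [unfold scale; simpl map; rewrite int_nil; ring|].
  unfold scale; simpl map; rewrite !int_cons; fold (scale a s); rewrite IH; simpl; ring. Qed.

Definition cst (c : R) : list (R * setOm Omega) := (c, fullset) :: nil.
Lemma eval_cst c w : simple_eval (cst c) w = c.
Proof. unfold cst; rewrite eval_cons, eval_nil, indic_full; simpl; ring. Qed.
Lemma int_cst Q c : simple_int Q (cst c) = c * Q fullset.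
Proof. unfold cst; rewrite int_cons, int_nil; simpl; ring. Qed.

Lemma si_app A s1 s2 : simple_in A s1 -> simple_in A s2 -> simple_in A (s1 ++ s2).
Proof. intros H1 H2 p Hp; apply in_app_or in Hp as [Hp|Hp]; auto. Qed.
Lemma si_scale A a s : simple_in A s -> simple_in A (scale a s).
Proof. intros H p Hp; unfold scale in Hp; apply in_map_iff in Hp as [q [<- Hq]]; simpl; apply H; auto. Qed.
Lemma si_cst A c : is_field A -> simple_in A (cst c).
Proof. intros [HF _] p [<-|[]]; simpl; auto. Qed.
Lemma si_cons A p s : simple_in A (p :: s) -> A (snd p) /\ simple_in A s.
Proof. intros H; split; [apply H; left; auto | intros q Hq; apply H; right; auto]. Qed.

Section Charge.
Variables (A : setOm Omega -> Prop) (Q : setOm Omega -> R).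
Hypothesis HA : is_field A.
Hypothesis HQ : pba A Q.

Lemma fA E : A fullset. Proof. destruct HA as [h _]; exact h. Qed.
Lemma cA E : A E -> A (compl E). Proof. destruct HA as [_ [h _]]; apply h. Qed.
Lemma iA E F : A E -> A F -> A (inter E F). Proof. destruct HA as [_ [_ h]]; apply h. Qed.

Lemma q_split X Y : A X -> A Y -> Q X = Q (inter X Y) + Q (inter X (compl Y)).
Proof.
  intros hX hY. destruct HQ as [_ [_ Hadd]].
  rewrite <- Hadd.
  - f_equal. apply set_ext; intro w; unfold union, inter, compl; split.
    + intros h; destruct (classic (Y w)); tauto.
    + tauto.
  - apply iA; auto.
  - apply iA; auto; apply cA; auto.
  - unfold inter, compl; tauto.
Qed.

Lemma q_nonneg X : A X -> 0 <= Q X.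
Proof. destruct HQ as [h _]; apply h. Qed.

Lemma q_mono X Y : A X -> A Y -> (forall w, X w -> Y w) -> Q X <= Q Y.
Proof.
  intros hX hY hXY. rewrite (q_split Y X) by auto.
  replace (inter Y X) with X.
  - assert (hh : A (inter Y (compl X))) by (apply iA; auto; apply cA; auto).
    pose proof (q_nonneg _ hh) as h. lra.
  - apply set_ext; unfold inter; intro w; split; [intros; split; auto|tauto].
Qed.

Lemma q_full : Q fullset = 1. Proof. destruct HQ as [_ [h _]]; exact h. Qed.

Lemma inter_full X : inter X fullset = X.
Proof. apply set_ext; unfold inter, fullset; tauto. Qed.

Lemma q_empty G : A G -> (forall w, ~ G w) -> Q G = 0.
Proof.
  intros hG hn.
  assert (h := q_split fullset G (fA G) hG).
  replace (inter fullset G) with G in h by (apply set_ext; unfold inter, fullset; tauto).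
  replace (inter fullset (compl G)) with (@fullset Omega) in h
    by (apply set_ext; unfold inter, fullset, compl; intro w; specialize (hn w); tauto).
  lra.
Qed.

Definition int_on G s := fold_right (fun p acc => fst p * Q (inter (snd p) G) + acc) 0 s.

Lemma int_on_split s G E : simple_in A s -> A G -> A E ->
  int_on G s = int_on (inter G E) s + int_on (inter G (compl E)) s.
Proof.
  intros hs hG hE. induction s as [|[c X] s IH]; [simpl; ring|].
  apply si_cons in hs as [hX hs]. simpl in hX |- *.
  rewrite (q_split (inter X G) E) by (auto; apply iA; auto).
  replace (inter (inter X G) E) with (inter X (inter G E))
    by (apply set_ext; unfold inter; tauto).
  replace (inter (inter X G) (compl E)) with (inter X (inter G (compl E)))
    by (apply set_ext; unfold inter; tauto).
  rewrite IH by auto. ring.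
Qed.

Lemma pos_gen s : simple_in A s -> forall G k, A G ->
  (forall w, G w -> 0 <= k + simple_eval s w) -> 0 <= k * Q G + int_on G s.
Proof.
  induction s as [|[c E] s IH]; intros hs G k hG H.
  - simpl. destruct (classic (exists w, G w)) as [[w hw]|hn].
    + specialize (H w hw). rewrite eval_nil in H.
      pose proof (q_nonneg G hG). nra.
    + rewrite q_empty; auto; [lra|]. intros w hw; apply hn; eauto.
  - apply si_cons in hs as [hE hs]; simpl in hE.
    assert (h1 := IH hs (inter G E) (k + c) (iA _ _ hG hE)).
    assert (h2 := IH hs (inter G (compl E)) k (iA _ _ hG (cA _ hE))).
    assert (e1 : int_on G ((c, E) :: s) = c * Q (inter E G) + int_on G s) by reflexivity.
    rewrite e1.
    rewrite (int_on_split s G E) by auto.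
    rewrite (q_split G E) by auto.
    replace (inter E G) with (inter G E) by (apply set_ext; unfold inter; tauto).
    assert (0 <= (k + c) * Q (inter G E) + int_on (inter G E) s).
    { apply h1. intros w [hw hw']. specialize (H w hw).
      rewrite eval_cons, indic_in in H by auto. simpl in H. lra. }
    assert (0 <= k * Q (inter G (compl E)) + int_on (inter G (compl E)) s).
    { apply h2. intros w [hw hw']. specialize (H w hw).
      rewrite eval_cons, indic_out in H by auto. simpl in H. lra. }
    lra.
Qed.

Lemma int_on_full s : int_on fullset s = simple_int Q s.
Proof. induction s as [|[c X] s IH]; [reflexivity|].
  simpl. rewrite inter_full. fold (int_on fullset s). rewrite IH. reflexivity. Qed.

Lemma pos s : simple_in A s -> (forall w, 0 <= simple_eval s w) -> 0 <= simple_int Q s.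
Proof.
  intros hs H. rewrite <- int_on_full.
  replace (int_on fullset s) with (0 * Q fullset + int_on fullset s) by ring.
  apply pos_gen; auto. apply fA; exact fullset. intros w _; rewrite Rplus_0_l; auto.
Qed.

Lemma int_mono s1 s2 c : simple_in A s1 -> simple_in A s2 ->
  (forall w, simple_eval s1 w <= simple_eval s2 w + c) ->
  simple_int Q s1 <= simple_int Q s2 + c.
Proof.
  intros h1 h2 H.
  assert (h := pos (s2 ++ cst c ++ scale (-1) s1)).
  rewrite !int_app, int_cst, int_scale, q_full in h.
  cut (0 <= simple_int Q s2 + (c * 1 + -1 * simple_int Q s1)); [lra|].
  apply h. apply si_app; auto; apply si_app; [apply si_cst; auto|apply si_scale; auto].
  intro w; rewrite !eval_app, eval_cst, eval_scale. specialize (H w). lra.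
Qed.

Lemma lip s1 s2 d : simple_in A s1 -> simple_in A s2 ->
  (forall w, Rabs (simple_eval s1 w - simple_eval s2 w) <= d) ->
  Rabs (simple_int Q s1 - simple_int Q s2) <= d.
Proof.
  intros h1 h2 H. apply abs_le.
  assert (a := int_mono s1 s2 d h1 h2).
  assert (b := int_mono s2 s1 d h2 h1).
  split; [cut (simple_int Q s2 <= simple_int Q s1 + d); [lra|] | cut (simple_int Q s1 <= simple_int Q s2 + d); [lra|]].
  - apply b; intro w; specialize (H w); apply abs_le in H; lra.
  - apply a; intro w; specialize (H w); apply abs_le in H; lra.
Qed.

Lemma approx_bound f I s e : is_integral A Q f I -> simple_in A s ->
  (forall w, Rabs (f w - simple_eval s w) <= e) ->
  Rabs (I - simple_int Q s) <= e.
Proof.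
  intros HI hs H. apply abs_le.
  cut (forall eta, 0 < eta -> Rabs (I - simple_int Q s) <= e + eta).
  { intros K. split.
    - cut (-(I - simple_int Q s) <= e); [lra|]. apply le_eps; intros eta he.
      specialize (K eta he); apply abs_le in K; lra.
    - apply le_eps; intros eta he. specialize (K eta he); apply abs_le in K; lra. }
  intros eta he.
  destruct (HI (eta/2)) as [s' [hs' [H1 H2]]]; [lra|].
  assert (L := lip s s' (e + eta/2) hs hs').
  assert (Rabs (simple_int Q s - simple_int Q s') <= e + eta/2).
  { apply L. intro w. specialize (H w); specialize (H1 w).
    apply abs_le in H; apply abs_le in H1; apply abs_le; lra. }
  apply abs_le in H0; apply abs_le in H2; apply abs_le; lra.
Qed.

Lemma int_ge g J m : is_integral A Q g J -> (forall w, m <= g w) -> m <= J.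
Proof.
  intros HI H.
  cut (forall eta, 0 < eta -> m <= J + eta).
  { intros K. destruct (Rle_or_lt m J); auto. specialize (K ((m - J)/2)). lra. }
  intros eta he. destruct (HI (eta/2)) as [s' [hs' [H1 H2]]]; [lra|].
  assert (P := int_mono (cst m) s' (eta/2) (si_cst A m HA) hs').
  rewrite int_cst, q_full in P.
  cut (m * 1 <= simple_int Q s' + eta / 2). { apply abs_le in H2; lra. }
  apply P. intro w; rewrite eval_cst. specialize (H w); specialize (H1 w); apply abs_le in H1; lra.
Qed.

Lemma integral_exists f : in_B A f -> exists I, is_integral A Q f I.
Proof.
  intros HB.
  set (Sx := fun x => exists s, simple_in A s /\ (forall w, simple_eval s w <= f w) /\ x = simple_int Q s).
  destruct (HB 1) as [s0 [hs0 H0]]; [lra|].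
  assert (Hb : bound Sx).
  { exists (simple_int Q s0 + 1). intros x [s [hs [Hs ->]]].
    apply int_mono; auto. intro w; specialize (Hs w); specialize (H0 w); apply abs_le in H0; lra. }
  assert (Hne : exists x, Sx x).
  { exists (simple_int Q (s0 ++ cst (-1))). exists (s0 ++ cst (-1)). split; [apply si_app; auto; apply si_cst; auto|].
    split; auto. intro w; rewrite eval_app, eval_cst; specialize (H0 w); apply abs_le in H0; lra. }
  destruct (completeness Sx Hb Hne) as [m [Hub Hlub]].
  exists m. intros eps he.
  destruct (HB (eps/2)) as [s [hs Hs]]; [lra|].
  exists s; split; auto. split.
  - intro w; specialize (Hs w); apply abs_le in Hs; apply abs_le; lra.
  - assert (m1 : simple_int Q (s ++ cst (-(eps/2))) <= m).
    { apply Hub. exists (s ++ cst (-(eps/2))); split; [apply si_app; auto; apply si_cst; auto|].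
      split; auto. intro w; rewrite eval_app, eval_cst; specialize (Hs w); apply abs_le in Hs; lra. }
    rewrite int_app, int_cst, q_full in m1.
    assert (m2 : m <= simple_int Q s + eps/2).
    { apply Hlub. intros x [s' [hs' [Hs' ->]]]. apply int_mono; auto.
      intro w; specialize (Hs w); specialize (Hs' w); apply abs_le in Hs; lra. }
    apply abs_le; lra.
Qed.

End Charge.

Lemma is_integral_ext (A : setOm Omega -> Prop) Q (f g : Omega -> R) I J : (forall w, f w = g w) -> I = J ->
  is_integral A Q f I -> is_integral A Q g J.
Proof.
  intros Hfg <- H eps he; destruct (H eps he) as [s [H1 [H2 H3]]].
  exists s; split; [|split]; auto; intro w; rewrite <- Hfg; auto.
Qed.

Lemma is_integral_in_B (A : setOm Omega -> Prop) Q (f : Omega -> R) I : is_integral A Q f I -> in_B A f.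
Proof. intros H eps he; destruct (H eps he) as [s [H1 [H2 _]]]; eauto. Qed.

Lemma comb_bound a b x y eta eps : Rabs x <= eta -> Rabs y <= eta ->
  eta * (Rabs a + Rabs b + 1) = eps -> 0 <= eta -> Rabs (a * x + b * y) <= eps.
Proof.
  intros hx hy he h0.
  eapply Rle_trans; [apply Rabs_triang|]. rewrite !Rabs_mult.
  assert (Rabs a * Rabs x <= Rabs a * eta) by (apply Rmult_le_compat_l; auto; apply Rabs_pos).
  assert (Rabs b * Rabs y <= Rabs b * eta) by (apply Rmult_le_compat_l; auto; apply Rabs_pos).
  nra.
Qed.

Lemma lincomb (A : setOm Omega -> Prop) Q (f g : Omega -> R) I J a b : is_integral A Q f I -> is_integral A Q g J ->
  is_integral A Q (fun w => a * f w + b * g w) (a * I + b * J).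
Proof.
  intros HI HJ eps he.
  assert (hp : 0 < Rabs a + Rabs b + 1) by (pose proof (Rabs_pos a); pose proof (Rabs_pos b); lra).
  set (eta := eps / (Rabs a + Rabs b + 1)).
  assert (he' : 0 < eta) by (unfold eta; apply Rdiv_lt_0_compat; auto).
  assert (hq : eta * (Rabs a + Rabs b + 1) = eps) by (unfold eta; field; lra).
  destruct (HI eta he') as [s1 [h1 [H1 K1]]].
  destruct (HJ eta he') as [s2 [h2 [H2 K2]]].
  exists (scale a s1 ++ scale b s2). split; [apply si_app; apply si_scale; auto|]. split.
  - intro w. rewrite eval_app, !eval_scale.
    replace (a * f w + b * g w - (a * simple_eval s1 w + b * simple_eval s2 w))
      with (a * (f w - simple_eval s1 w) + b * (g w - simple_eval s2 w)) by ring.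
    apply comb_bound with eta; auto; lra.
  - rewrite int_app, !int_scale.
    replace (a * I + b * J - (a * simple_int Q s1 + b * simple_int Q s2))
      with (a * (I - simple_int Q s1) + b * (J - simple_int Q s2)) by ring.
    apply comb_bound with eta; auto; lra.
Qed.

Lemma indic_integral (A : setOm Omega -> Prop) Q G : A G -> is_integral A Q (indic G) (Q G).
Proof.
  intros hG eps he. exists ((1, G) :: nil). split.
  - intros p [<-|[]]; simpl; auto.
  - split.
    + intro w; rewrite eval_cons, eval_nil; simpl. replace (indic G w - (1 * indic G w + 0)) with 0 by ring.
      rewrite Rabs_R0; lra.
    + rewrite int_cons, int_nil; simpl. replace (Q G - (1 * Q G + 0)) with 0 by ring.
      rewrite Rabs_R0; lra.
Qed.

End S.


Section TS.
Variables (Omega : Type) (A M : setOm Omega -> Prop) (t : Omega -> setOm Omega -> R).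
Hypothesis HA : is_field A.
Hypothesis HM : is_field M.
Hypothesis HMA : forall E, M E -> A E.
Hypothesis Ht : forall w, pba A (t w).
Hypothesis Htm : forall E w, M E -> E w -> t w E = 1.

Lemma tM G w : M G -> t w G = indic G w.
Proof.
  intros hG. destruct (classic (G w)) as [h|h].
  - rewrite indic_in by auto. auto.
  - rewrite indic_out by auto.
    assert (hc : M (compl G)) by (destruct HM as [_ [k _]]; auto).
    assert (e1 := Htm (compl G) w hc h).
    assert (e2 := q_split A (t w) HA (Ht w) fullset G (fA A HA G) (HMA G hG)).
    rewrite (proj1 (proj2 (Ht w))) in e2.
    replace (inter fullset G) with G in e2 by (apply set_ext; unfold inter, fullset; tauto).
    replace (inter fullset (compl G)) with (compl G) in e2 by (apply set_ext; unfold inter, fullset; tauto).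
    lra.
Qed.

Lemma tM_int w s : simple_in M s -> simple_int (t w) s = simple_eval s w.
Proof.
  induction s as [|p s IH]; intros hs; [reflexivity|].
  apply si_cons in hs as [hp hs]. rewrite int_cons, eval_cons, IH, tM; auto.
Qed.

Lemma si_mono s : simple_in M s -> simple_in A s.
Proof. intros h p hp; apply HMA, h, hp. Qed.

Lemma MB_int w h : (forall eps, 0 < eps -> exists s, simple_in M s /\
    forall w, Rabs (h w - simple_eval s w) <= eps) -> is_integral A (t w) h (h w).
Proof.
  intros H eps he. destruct (H eps he) as [s [hs Hs]].
  exists s; split; [apply si_mono; auto|]. split; auto.
  rewrite tM_int; auto.
Qed.

Definition restr (F : setOm Omega) (s : list (R * setOm Omega)) := map (fun p => (fst p, inter (snd p) F)) s.

Lemma eval_restr F s w : simple_eval (restr F s) w = simple_eval s w * indic F w.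
Proof.
  induction s as [|p s IH]; [unfold restr; simpl map; rewrite eval_nil; ring|].
  unfold restr; simpl map; rewrite !eval_cons; fold (restr F s); rewrite IH; simpl.
  unfold indic, inter; repeat destruct excluded_middle_informative; try tauto; ring.
Qed.

Lemma t_EF E F w : A E -> M F -> t w (inter E F) = t w E * indic F w.
Proof.
  intros hE hF. assert (hFA := HMA F hF).
  assert (hcM : M (compl F)) by (destruct HM as [_ [k _]]; auto).
  assert (hEF : A (inter E F)) by (apply iA; auto).
  assert (hEcF : A (inter E (compl F))) by (apply iA; auto; apply cA; auto).
  destruct (classic (F w)) as [h|h].
  - rewrite indic_in by auto.
    assert (e := q_split A (t w) HA (Ht w) E F hE hFA).
    assert (m := q_mono A (t w) HA (Ht w) (inter E (compl F)) (compl F) hEcF (HMA _ hcM)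
      (fun w0 (k : inter E (compl F) w0) => proj2 k)).
    assert (n := q_nonneg A (t w) (Ht w) _ hEcF).
    rewrite (tM (compl F) w hcM), indic_out in m by (unfold compl; tauto).
    lra.
  - rewrite indic_out by auto.
    assert (m := q_mono A (t w) HA (Ht w) (inter E F) F hEF hFA
      (fun w0 (k : inter E F w0) => proj2 k)).
    assert (n := q_nonneg A (t w) (Ht w) _ hEF).
    rewrite (tM F w hF), indic_out in m by auto. lra.
Qed.

End TS.


Lemma disint_sum (Omega : Type) (A M : setOm Omega -> Prop) (t : Omega -> setOm Omega -> R) P :
  is_field M -> disintegrable A M t P -> forall s, simple_in A s ->
  is_integral A P (fun w => simple_int (t w) s) (simple_int P s).
Proof.
  intros HM D s. induction s as [|[c E] s IH]; intros hs.
  - intros eps he. exists nil. split; [intros p []|]. split.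
    + intro w; cbv beta; rewrite int_nil, eval_nil, Rminus_0_r, Rabs_R0; lra.
    + rewrite int_nil, Rminus_0_r, Rabs_R0; lra.
  - apply si_cons in hs as [hE hs]; simpl in hE.
    assert (h1 := D E fullset hE (proj1 HM)).
    assert (h2 : is_integral A P (fun w => t w E) (P E)).
    { eapply is_integral_ext; [| |exact h1].
      - intro w; cbv beta; rewrite indic_full; ring.
      - rewrite inter_full; auto. }
    assert (h3 := lincomb A P _ _ _ _ c 1 h2 (IH hs)).
    eapply is_integral_ext; [| |exact h3].
    + intro w; cbv beta; rewrite int_cons; simpl; ring.
    + rewrite int_cons; simpl; ring.
Qed.

Theorem theorem1 (Omega : Type) (A M : (Omega -> Prop) -> Prop)
    (t : Omega -> (Omega -> Prop) -> R) (P : (Omega -> Prop) -> R) :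
  type_space A M t -> pba A P ->
  (disintegrable A M t P \/ money_pump A t P) /\
  ~ (disintegrable A M t P /\ money_pump A t P).
Proof.
  intros HT HP. destruct HT as [HA [HM [HMA [Ht [HtB Htm]]]]].
  split.
  - destruct (classic (disintegrable A M t P)) as [D|ND]; [left; exact D | right].
    unfold disintegrable in ND.
    apply not_all_ex_not in ND as [E ND]. apply not_all_ex_not in ND as [F ND].
    apply imply_to_and in ND as [hE ND]. apply imply_to_and in ND as [hF ND].
    set (h := fun w => t w E * indic F w).
    assert (hMB : forall eps, 0 < eps -> exists s, simple_in M s /\
        forall w, Rabs (h w - simple_eval s w) <= eps).
    { intros eps he. destruct (HtB E hE eps he) as [s [hs Hs]].
      exists (restr Omega F s). split.
      - intros p hp. unfold restr in hp. apply in_map_iff in hp as [q [<- hq]]. simpl.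
        apply (iA M HM); auto.
      - intro w. rewrite eval_restr. unfold h. specialize (Hs w).
        destruct (classic (F w)) as [k|k];
          [rewrite indic_in by auto | rewrite indic_out by auto].
        + replace (t w E * 1 - simple_eval s w * 1) with (t w E - simple_eval s w) by ring; auto.
        + replace (t w E * 0 - simple_eval s w * 0) with 0 by ring. rewrite Rabs_R0; lra. }
    assert (hAB : in_B A h).
    { intros eps he. destruct (hMB eps he) as [s [hs Hs]]. exists s; split; auto.
      apply (si_mono Omega A M HMA); auto. }
    destruct (integral_exists A P HA HP h hAB) as [J HJ].
    assert (hEF : A (inter E F)) by (apply iA; auto).
    set (d := P (inter E F) - J).
    assert (hd : d <> 0).
    { intro k. apply ND. replace (P (inter E F)) with J by (unfold d in k; lra). exact HJ. }
    assert (IP := lincomb A P _ _ _ _ (-d) d (indic_integral A P _ hEF) HJ).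
    exists (fun w => -d * indic (inter E F) w + d * h w). split; [|split].
    + eapply is_integral_in_B; exact IP.
    + intro w. exists (-d * t w (inter E F) + d * h w). split.
      * apply lincomb. apply indic_integral; auto.
        apply (MB_int Omega A M t HA HM HMA Ht Htm w h hMB).
      * unfold h. rewrite (t_EF Omega A M t HA HM HMA Ht Htm); auto. lra.
    + eexists; split; [exact IP|].
      assert (0 < d * d).
      { destruct (Rlt_or_le 0 d); [nra|]. destruct (Rle_lt_or_eq_dec d 0); [auto|nra|contradiction]. }
      replace (- d * P (inter E F) + d * J) with (-(d*d)) by (unfold d; ring). lra.
  - intros [D [f [fB [Hw [IP [HIP HIPneg]]]]]].
    set (eps := - IP / 4).
    destruct (HIP eps) as [s [hs [Hs Hs2]]]; [unfold eps; lra|].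
    assert (hg : forall w, -eps <= simple_int (t w) s).
    { intro w. destruct (Hw w) as [Iw [HIw Iw0]].
      assert (k := approx_bound A (t w) HA (Ht w) f Iw s eps HIw hs Hs).
      apply abs_le in k. lra. }
    assert (k := int_ge A P HA HP _ _ (-eps) (disint_sum Omega A M t P HM D s hs) hg).
    apply abs_le in Hs2. unfold eps in *. lra.
Qed.
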